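(* Let $H\le\mathrm{GL}_n(q)$ and suppose that, in a suitable basis of $V=\mathbb{F}_q^n$, every $g\in H$ has the block upper-triangular form $$\begin{pmatrix} g_k & g_{k,k-1} & \cdots & g_{k,1}\\ 0 & g_{k-1} & \cdots & g_{k-1,1}\\ \vdots & & \ddots & \vdots\\ 0 & 0 & \cdots & g_1\end{pmatrix},$$ where each $\gamma_i:H\to\mathrm{GL}_{n_i}(q)$, $g\mapsto g_i$, is an irreducible representation, $g_{i,j}$ is an $n_i\times n_j$ matrix and $n_1+\dots+n_k=n$; put $H_i=\gamma_i(H)$. If for every $i$ there exists $x_i\in\mathrm{GL}_{n_i}(q)$ (respectively $x_i\in\mathrm{SL}_{n_i}(q)$) such that $H_i\cap H_i^{x_i}$ consists of upper triangular matrices, then there exist $x,y\in\mathrm{GL}_n(q)$ (respectively $x,y\in\mathrm{SL}_n(q)$) such that $(H\cap H^x)\cap(H\cap H^x)^y\le D(\mathrm{GL}_n(q))$.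
   Context: $D(\mathrm{GL}_n(q))$ is the group of diagonal matrices (in the chosen basis); $H^x=x^{-1}Hx$. *)

(* Defs.v *)
From HB Require Import structures.
From mathcomp Require Import all_boot all_order all_algebra all_fingroup all_field.
Set Implicit Arguments. Unset Strict Implicit. Unset Printing Implicit Defensive.
Import GRing.Theory.
Local Open Scope ring_scope.

Section Defs.
Variable F : finFieldType.

Definition inGL (sl : bool) m (x : 'M[F]_m) : bool :=
  (x \in unitmx) && (sl ==> (\det x == 1)).

Definition conjset m (H : {set 'M[F]_m}) (x : 'M[F]_m) : {set 'M[F]_m} :=
  [set invmx x *m h *m x | h in H].

(* H is a subgroup of GL_m(F) (finite, so closure under inverses follows) *)
Definition is_matgroup m (H : {set 'M[F]_m}) : Prop :=
  [/\ 1%:M \in H, (forall g h, g \in H -> h \in H -> g *m h \in H)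
    & (forall g, g \in H -> g \in unitmx)].

Definition upper_triangular m (A : 'M[F]_m) : Prop :=
  forall i j : 'I_m, (j < i)%N -> A i j = 0.

Definition diagonal m (A : 'M[F]_m) : Prop :=
  forall i j : 'I_m, i != j -> A i j = 0.

(* A subspace is given as the row space of U (rows = the column vectors). *)
Definition irreducible_set m (S : {set 'M[F]_m}) : Prop :=
  (0 < m)%N /\
  forall U : 'M[F]_m,
    (forall g, g \in S -> (U *m g^T <= U)%MS) -> (U == 0) || row_full U.

Section Blocks.
Variables (k : nat) (s : 'I_k -> nat).
Notation N := (\sum_(i < k) s i)%N.

(* Block upper triangular w.r.t. the decomposition N = s 0 + ... + s (k-1),
   block 0 being the top-left one: blocks strictly below the diagonal vanish. *)
Definition block_upper (g : 'M[F]_N) : Prop :=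
  forall i j : 'I_k, (j < i)%N -> @submxblock F k k s s g i j = 0.

Definition gamma (i : 'I_k) (g : 'M[F]_N) : 'M[F]_(s i) :=
  @submxblock F k k s s g i i.

Definition Hblock (H : {set 'M[F]_N}) (i : 'I_k) : {set 'M[F]_(s i)} :=
  [set gamma i g | g in H].
End Blocks.
End Defs.

(* Main.v *)
Require Import Defs.
From HB Require Import structures.
From mathcomp Require Import all_boot all_order all_algebra all_fingroup all_field.
From mathcomp Require Import zify.
From Stdlib Require Import ClassicalEpsilon.
Local Open Scope ring_scope.
Import GRing.Theory.

Section Aux.
Variable F : finFieldType.

Lemma det_cast n m (e : n = m) (A : 'M[F]_n) : \det (castmx (e, e) A) = \det A.
Proof. by case: m / e; rewrite castmx_id. Qed.

Lemma det_size0 n (A : 'M[F]_n) : n = 0%N -> \det A = 1.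
Proof. move=> e; subst n; exact: det_mx00. Qed.

Lemma det_mxdiag k (s : 'I_k -> nat) (B : forall i, 'M[F]_(s i)) :
  \det (@mxdiag _ _ s B) = \prod_i \det (B i).
Proof.
elim: k s B => [|k IH] s B.
  by rewrite [RHS]big_ord0 det_size0 // big_ord0.
by rewrite mxdiag_recl det_cast det_ublock IH big_ord_recl.
Qed.

Lemma block_upper_tri k (s : 'I_k -> nat) (a : 'M[F]_(\sum_(i < k) s i)) :
  block_upper a -> (forall i, upper_triangular (gamma i a)) -> upper_triangular a.
Proof.
move=> Hb Hd.
have: is_trig_mx a^T.
  rewrite -[a](@submxblockK _ _ _ s s) tr_mxblock.
  apply/is_trig_mxblockP; split.
    by move=> i j lt; rewrite Hb // trmx0.
  move=> i; apply/is_trig_mxP => p q lt; rewrite mxE; exact: Hd i q p lt.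
by move/is_trig_mxP => T p q lt; have := T q p lt; rewrite mxE.
Qed.

Lemma exists_y (sl : bool) n : exists y : 'M[F]_n, inGL sl y /\
  forall a b, upper_triangular a -> upper_triangular b ->
    a = invmx y *m b *m y -> diagonal a.
Proof.
case: n => [|m].
  exists 1%:M; split; first by rewrite /inGL unitmx1 det1 eqxx implybT.
  by move=> a b _ _ _ [].
pose w : 'S_m.+1 := perm (@rev_ord_inj m.+1).
pose c : F := (-1) ^+ odd_perm w.
pose d := \row_(i < m.+1) (if i == ord0 then c else 1).
pose D : 'M[F]_m.+1 := diag_mx d.
pose y := perm_mx w *m D.
have cc : c * c = 1.
  by rewrite /c; case: (odd_perm w); rewrite ?expr0 ?expr1 ?mulr1 ?mulrNN ?mulr1.
have dety : \det y = 1.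
  rewrite det_mulmx det_perm det_diag big_ord_recl !mxE eqxx big1 ?mulr1 //.
  by move=> i _; rewrite mxE.
have yU : y \in unitmx by rewrite unitmxE dety unitr1.
exists y; split; first by rewrite /inGL yU dety eqxx implybT.
move=> a b ua ub ab i j nij.
have E : y *m a = b *m y by rewrite ab !mulmxA mulmxV // mul1mx.
case: (ltngtP i j) => [lij|lji|eij]; last first.
- by move: nij; rewrite (val_inj eij) eqxx.
- exact: ua.
have hw : forall x, (w^-1)%g x = rev_ord x.
  by move=> x; apply: (@perm_inj _ w); rewrite permKV permE rev_ordK.
have := congr1 (fun M : 'M[F]_m.+1 => M ((w^-1)%g i) j) E.
rewrite /y -mulmxA -row_permE mulmxA /D mul_mx_diag mul_diag_mx -[w in perm_mx w]invgK -col_permE.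
rewrite !mxE permKV.
rewrite !hw ub; last by move: (ltn_ord j) lij; rewrite /rev_ord /=; lia.
rewrite mul0r => /eqP; rewrite mulf_eq0 => /orP [|/eqP //].
have c0 : c != 0 by apply/eqP => c0; move: cc; rewrite c0 mul0r => /eqP; rewrite eq_sym oner_eq0.
by case: (i == ord0) => //; rewrite ?(negPf c0) ?oner_eq0.
Qed.
End Aux.

Theorem mainTheorem10 (F : finFieldType) (sl : bool) (k : nat) (s : 'I_k -> nat)
    (H : {set 'M[F]_(\sum_(i < k) s i)}) :
  is_matgroup H ->
  (forall g, g \in H -> block_upper g) ->
  (forall i : 'I_k, irreducible_set (Hblock H i)) ->
  (forall i : 'I_k, exists2 xi : 'M[F]_(s i), inGL sl xi &
     forall a, a \in Hblock H i :&: conjset (Hblock H i) xi -> upper_triangular a) ->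
  exists x : 'M[F]_(\sum_(i < k) s i), exists y : 'M[F]_(\sum_(i < k) s i),
    [/\ inGL sl x, inGL sl y &
      forall a, a \in (H :&: conjset H x) :&: conjset (H :&: conjset H x) y ->
        diagonal a].
Proof.
move=> _ Hbu _ Hx.
have xf : forall i, {xi : 'M[F]_(s i) | inGL sl xi /\
    (forall a, a \in Hblock H i :&: conjset (Hblock H i) xi -> upper_triangular a)}.
  move=> i; apply: constructive_indefinite_description.
  by case: (Hx i) => xi h1 h2; exists xi.
pose X := @mxdiag _ _ s (fun i => sval (xf i)).
have detX : \det X = \prod_i \det (sval (xf i)) by apply: det_mxdiag.
have xiU : forall i, sval (xf i) \in unitmx.
  by move=> i; case: (svalP (xf i)) => /andP [].
have XU : X \in unitmx.
  rewrite unitmxE detX; apply: (big_ind (fun x => x \is a GRing.unit)).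
  - exact: unitr1.
  - by move=> u v hu hv; rewrite unitrM hu hv.
  - by move=> i _; rewrite -unitmxE.
have inX : inGL sl X.
  rewrite /inGL XU /=; apply/implyP => sl1; rewrite detX big1 //.
  move=> i _; case: (svalP (xf i)) => /andP [_ h] _.
  by move/implyP: h => /(_ sl1) /eqP.
have Kup : forall a, a \in H :&: conjset H X -> upper_triangular a.
  move=> a /setIP [aH /imsetP [h hH ha]].
  apply: (@block_upper_tri F k s a (Hbu a aH)) => i.
  case: (svalP (xf i)) => _ Hi; apply: Hi.
  rewrite inE; apply/andP; split; first exact: imset_f.
  apply/imsetP; exists (gamma i h); first exact: imset_f.
  have E : X *m a = h *m X by rewrite ha !mulmxA mulmxV // mul1mx.
  have Ei : sval (xf i) *m gamma i a = gamma i h *m sval (xf i).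
    have E' : X *m (mxblock (fun p q => @submxblock _ _ _ s s a p q)) =
              (mxblock (fun p q => @submxblock _ _ _ s s h p q)) *m X.
      by rewrite !submxblockK.
    have := congr1 (fun M => @submxblock _ _ _ s s M i i) E'.
    by rewrite /= /X mul_mxdiag_mxblock mul_mxblock_mxdiag !mxblockK.
  rewrite -[gamma i a]mul1mx -(mulVmx (xiU i)) -[in LHS]mulmxA Ei mulmxA //.
have [y [iny Hy]] := exists_y F sl (\sum_(i < k) s i).
exists X, y; split => // a /setIP [aK /imsetP [b bK ab]].
exact: (Hy a b (Kup a aK) (Kup b bK) ab).
Qed.
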